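(* Let $\mathcal{Y}=\{1,\dots,m\}$ be a finite set of classes and let $\Delta(\mathcal{Y})$ denote the set of probability vectors on $\mathcal{Y}$. Let $u:\mathcal{Y}\times\mathcal{Y}\to\mathbb{R}_+$ be a nonnegative utility function that is nondegenerate, i.e. for every $y\in\mathcal{Y}$ there exists $a\in\mathcal{Y}$ with $u(a,y)>0$. Let $\ell:\Delta(\mathcal{Y})\times\mathcal{Y}\to\mathbb{R}$ be a strictly proper loss function, i.e. for every $q\in\Delta(\mathcal{Y})$, $q$ is the unique minimizer over $p\in\Delta(\mathcal{Y})$ of $\bar\ell(p,q)\equiv\sum_{y\in\mathcal{Y}} q_y\,\ell(p,y)$. Define the utility-weighted loss $\ell^u(p,y)\equiv\sum_{y'\in\mathcal{Y}}\ell(p,y')\,u(y',y)$ and its expectation $\bar\ell^u(p,q)\equiv\sum_{y\in\mathcal{Y}} q_y\,\ell^u(p,y)$, and the expected utility $\bar u(y,q)\equiv\sum_{y'\in\mathcal{Y}}u(y,y')\,q_{y'}$. Then for every $q\in\Delta(\mathcal{Y})$, the problem $\min_{p\in\Delta(\mathcal{Y})}\bar\ell^u(p,q)$ has a unique minimizer $p^u(q)$, given for each class $y$ by $$p^u_y(q)=\frac{\bar u(y,q)}{\sum_{y'\in\mathcal{Y}}\bar u(y',q)}.$$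
   Context: $p_y,q_y$ denote the $y$-th components of probability vectors $p,q\in\Delta(\mathcal{Y})$. *)

(* Defs.v *)
From mathcomp Require Import all_boot all_order all_algebra.
Set Implicit Arguments. Unset Strict Implicit. Unset Printing Implicit Defensive.
Import Order.TTheory GRing.Theory Num.Theory.
Local Open Scope ring_scope.

(* Probability vectors on the class set 'I_m = {0,...,m-1} (i.e. {1,...,m}). *)
Definition prob_vec (R : realFieldType) (m : nat) (p : 'I_m -> R) : Prop :=
  (forall y, 0 <= p y) /\ \sum_(y < m) p y = 1.

Definition exp_loss (R : realFieldType) (m : nat)
  (l : ('I_m -> R) -> 'I_m -> R) (p q : 'I_m -> R) : R :=
  \sum_(y < m) q y * l p y.

Definition strictly_proper (R : realFieldType) (m : nat)
  (l : ('I_m -> R) -> 'I_m -> R) : Prop :=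
  forall q, prob_vec q ->
    forall p, prob_vec p -> p <> q -> exp_loss l q q < exp_loss l p q.

Definition util_loss (R : realFieldType) (m : nat)
  (l : ('I_m -> R) -> 'I_m -> R) (u : 'I_m -> 'I_m -> R) (p : 'I_m -> R) (y : 'I_m) : R :=
  \sum_(y' < m) l p y' * u y' y.

Definition exp_util (R : realFieldType) (m : nat)
  (u : 'I_m -> 'I_m -> R) (y : 'I_m) (q : 'I_m -> R) : R :=
  \sum_(y' < m) u y y' * q y'.

(* Main.v *)
Require Import Defs.
From mathcomp Require Import all_boot all_order all_algebra.
Import Order.TTheory GRing.Theory Num.Theory.
Local Open Scope ring_scope.

Theorem theorem1 (R : realFieldType) (m : nat) (hm : (0 < m)%N)
  (u : 'I_m -> 'I_m -> R) (l : ('I_m -> R) -> 'I_m -> R)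
  (u_ge0 : forall a y, 0 <= u a y)
  (u_nondeg : forall y, exists a, 0 < u a y)
  (l_proper : strictly_proper l)
  (q : 'I_m -> R) (hq : prob_vec q) :
  let pu := fun y => exp_util u y q / \sum_(y' < m) exp_util u y' q in
  prob_vec pu /\
  (forall p, prob_vec p -> p <> pu ->
     exp_loss (util_loss l u) pu q < exp_loss (util_loss l u) p q).
Proof.
move=> pu; case: hq => q0 q1.
set S := \sum_(y' < m) exp_util u y' q.
have eu0 : forall y, 0 <= exp_util u y q.
  by move=> y; apply: sumr_ge0 => i _; apply: mulr_ge0.
have S0 : 0 < S.
  have /existsP [y qy] : [exists y, 0 < q y].
    apply: contraT => /existsPn H.
    have : \sum_(y < m) q y <= 0.
      by apply: sumr_le0 => i _; rewrite leNgt; apply: H.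
    by rewrite q1 ler10.
  have [a ha] := u_nondeg y.
  have h1 : 0 < u a y * q y by apply: mulr_gt0.
  apply: (lt_le_trans h1); rewrite /S (bigD1 a) //=.
  rewrite -[X in X <= _]addr0; apply: lerD; last by apply: sumr_ge0.
  rewrite /exp_util (bigD1 y) //= -[X in X <= _]addr0; apply: lerD => //.
  by apply: sumr_ge0 => i _; apply: mulr_ge0.
have Sneq : S != 0 by rewrite gt_eqF.
have hpu : prob_vec pu.
  split; first by move=> y; rewrite /pu divr_ge0 // ltW.
  by rewrite /pu -mulr_suml mulfV.
have key : forall p, exp_loss (util_loss l u) p q = S * exp_loss l p pu.
  move=> p; rewrite /exp_loss /util_loss /pu -/S big_distrr /=.
  under [RHS]eq_bigr => y _ do rewrite mulrA mulrCA divff // mulr1.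
  under eq_bigr => y _ do rewrite big_distrr.
  rewrite exchange_big /=; apply: eq_bigr => y' _.
  rewrite /exp_util big_distrl /=; apply: eq_bigr => y _.
  by rewrite [l p y' * _]mulrC mulrA [q y * _]mulrC.
split => // p hp hne.
rewrite !key ltr_pM2l //.
exact: l_proper.
Qed.
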